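(* Let $H$ be a finitely generated group, let $\phi\in\operatorname{Aut}(H)$ and let $K$ be a proper subgroup of $H$ such that the normalizer $N_H(K)$ has finite index in $H$. Let $G=H\ast_{(K,\phi)}=\langle H, t;\ tkt^{-1}=\phi(k),\ k\in K\rangle$. Then $G$ is residually finite if and only if both $H$ and $N_H(K)/K$ are residually finite.
   Context: For a group $H$, $\phi\in\operatorname{Aut}(H)$ and a proper subgroup $K\lneq H$, the automorphism-induced HNN-extension $H\ast_{(K,\phi)}$ is the group given by the relative presentation $\langle H, t;\ tkt^{-1}=\phi(k),\ k\in K\rangle$. $N_H(K)$ denotes the normalizer of $K$ in $H$. *)

(* Defs.v *)
From Stdlib Require Import List.
Set Implicit Arguments.
Unset Strict Implicit.

Record group := Group {
  carrier :> Type;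
  mul : carrier -> carrier -> carrier;
  one : carrier;
  inv : carrier -> carrier;
  mulA : forall x y z, mul x (mul y z) = mul (mul x y) z;
  mul1g : forall x, mul one x = x;
  mulg1 : forall x, mul x one = x;
  mulVg : forall x, mul (inv x) x = one;
  mulgV : forall x, mul x (inv x) = one
}.
Arguments mul {g}.
Arguments one {g}.
Arguments inv {g}.

Definition conjg (G : group) (h k : G) : G := mul (mul h k) (inv h).

Definition is_subgroup (G : group) (P : G -> Prop) : Prop :=
  P one /\ (forall x y, P x -> P y -> P (mul x y)) /\ (forall x, P x -> P (inv x)).

Definition is_normal (G : group) (P : G -> Prop) : Prop :=
  is_subgroup P /\ (forall g x, P x -> P (conjg g x)).

Definition finite_index (G : group) (P : G -> Prop) : Prop :=
  exists s : list G, forall x : G,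
    exists r, In r s /\ exists m, P m /\ x = mul r m.

Definition finitely_generated (G : group) : Prop :=
  exists s : list G, forall P : G -> Prop, is_subgroup P ->
    (forall x, In x s -> P x) -> forall x, P x.

Definition residually_finite (G : group) : Prop :=
  forall g : G, g <> one ->
    exists M : G -> Prop, is_normal M /\ finite_index M /\ ~ M g.

Definition is_hom (G L : group) (f : G -> L) : Prop :=
  forall x y, f (mul x y) = mul (f x) (f y).

Definition is_automorphism (G : group) (phi : G -> G) : Prop :=
  is_hom phi /\ exists psi : G -> G,
    (forall x, psi (phi x) = x) /\ (forall x, phi (psi x) = x).

Definition normalizer (G : group) (K : G -> Prop) : G -> Prop :=
  fun h => forall k, K k <-> K (conjg h k).

(* Q (with map pi, only relevant on N) is a quotient group N / K:
   pi restricted to N is a surjective homomorphism onto Q with kernel K. *)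
Definition is_quotient_by (G : group) (N K : G -> Prop) (Q : group)
    (pi : G -> Q) : Prop :=
  (forall x y, N x -> N y -> pi (mul x y) = mul (pi x) (pi y)) /\
  (forall q : Q, exists x, N x /\ pi x = q) /\
  (forall x, N x -> (pi x = one <-> K x)).

(* "N/K is residually finite": every quotient group N/K is residually finite
   (the quotient is unique up to isomorphism). *)
Definition quotient_residually_finite (G : group) (N K : G -> Prop) : Prop :=
  forall (Q : group) (pi : G -> Q), is_quotient_by N K pi -> residually_finite Q.

(* (G, iota, t) is the HNN extension < H, t ; t k t^-1 = phi k, k in K >,
   characterised by the universal property of the relative presentation. *)
Definition is_HNN (H : group) (K : H -> Prop) (phi : H -> H)
    (G : group) (iota : H -> G) (t : G) : Prop :=
  is_hom iota /\
  (forall k, K k -> conjg t (iota k) = iota (phi k)) /\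
  (forall (L : group) (f : H -> L) (s : L),
     is_hom f -> (forall k, K k -> conjg s (f k) = f (phi k)) ->
     exists F : G -> L,
       (is_hom F /\ (forall h, F (iota h) = f h) /\ F t = s) /\
       (forall F' : G -> L, is_hom F' -> (forall h, F' (iota h) = f h) ->
          F' t = s -> forall x, F' x = F x)).

(* Main.v *)
From Stdlib Require Import List Arith Lia.
From Stdlib Require Import Classical ClassicalEpsilon FunctionalExtensionality PropExtensionality ProofIrrelevance.
From mathcomp Require Import ssreflect ssrfun ssrbool.
From Pilot Require Import Defs.
Set Implicit Arguments.
Unset Strict Implicit.

Module P1.

Section GB.
Variable G : group.
Implicit Types x y z : G.

Lemma mulKg x y : mul (inv x) (mul x y) = y.
Proof. by rewrite mulA mulVg mul1g. Qed.
Lemma mulKVg x y : mul x (mul (inv x) y) = y.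
Proof. by rewrite mulA mulgV mul1g. Qed.
Lemma mulgK x y : mul (mul y x) (inv x) = y.
Proof. by rewrite -mulA mulgV mulg1. Qed.
Lemma mulgKV x y : mul (mul y (inv x)) x = y.
Proof. by rewrite -mulA mulVg mulg1. Qed.
Lemma mulg_injl x y z : mul x y = mul x z -> y = z.
Proof. move=> E. by rewrite -(mulKg x y) E mulKg. Qed.
Lemma mulg_injr x y z : mul y x = mul z x -> y = z.
Proof. move=> E. by rewrite -(mulgK x y) E mulgK. Qed.
Lemma inv_uniq x y : mul x y = one -> inv x = y.
Proof. move=> E. apply: (@mulg_injl x). by rewrite mulgV E. Qed.
Lemma invK x : inv (inv x) = x.
Proof. apply: inv_uniq. apply mulVg. Qed.
Lemma invM x y : inv (mul x y) = mul (inv y) (inv x).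
Proof. apply: inv_uniq. by rewrite -mulA mulKVg mulgV. Qed.
Lemma inv1 : inv (one : G) = one.
Proof. apply: inv_uniq. apply mul1g. Qed.
Lemma eq_mulgV x y : mul x (inv y) = one -> x = y.
Proof. move=> E. by rewrite -(mulgKV y x) E mul1g. Qed.
Lemma eq_mulVg x y : mul (inv x) y = one -> x = y.
Proof. move=> E. by rewrite -(mulKVg x y) E mulg1. Qed.
Lemma inv_inj x y : inv x = inv y -> x = y.
Proof. move=> E. by rewrite -(invK x) E invK. Qed.
End GB.

Section Hom.
Variables G L : group.
Variable f : G -> L.
Hypothesis hf : is_hom f.
Lemma hom1 : f one = one.
Proof.
have E := hf one one. rewrite mul1g in E.
apply: (@mulg_injl _ (f one)). by rewrite -E mulg1.
Qed.
Lemma homV x : f (inv x) = inv (f x).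
Proof. symmetry. apply: inv_uniq. by rewrite -hf mulgV hom1. Qed.
Lemma homJ x y : f (conjg x y) = conjg (f x) (f y).
Proof. by rewrite /conjg !hf homV. Qed.
End Hom.

Lemma is_hom_comp (G L M : group) (f : G -> L) (g : L -> M) :
  is_hom f -> is_hom g -> is_hom (fun x => g (f x)).
Proof. move=> hf hg x y. by rewrite hf hg. Qed.

Record Perm (X : Type) := MkPerm {
  pf : X -> X; pb : X -> X;
  pfb : forall x, pf (pb x) = x; pbf : forall x, pb (pf x) = x }.
Arguments pf {X}. Arguments pb {X}.

Lemma perm_ext (X : Type) (p q : Perm X) : (forall x, pf p x = pf q x) -> p = q.
Proof.
move=> E.
have Ef : pf p = pf q by apply: functional_extensionality.
have Eb : pb p = pb q.
  apply: functional_extensionality => x.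
  by rewrite -{1}(pfb q x) -Ef pbf.
destruct p as [f1 b1 h1 h2], q as [f2 b2 h3 h4]; simpl in *.
subst f2 b2. f_equal; apply: proof_irrelevance.
Qed.

Section SymDef.
Variable X : Type.
Definition pmul (p q : Perm X) : Perm X.
refine (@MkPerm X (fun x => pf p (pf q x)) (fun x => pb q (pb p x)) _ _).
- move=> x. by rewrite pfb pfb.
- move=> x. by rewrite pbf pbf.
Defined.
Definition pone : Perm X := @MkPerm X (fun x => x) (fun x => x) (fun x => erefl) (fun x => erefl).
Definition pinv (p : Perm X) : Perm X := @MkPerm X (pb p) (pf p) (pbf p) (pfb p).
Definition SymG : group.
refine (@Group (Perm X) pmul pone pinv _ _ _ _ _).
- move=> x y z; by apply: perm_ext.
- move=> x; by apply: perm_ext.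
- move=> x; by apply: perm_ext.
- move=> x; apply: perm_ext => a /=; by rewrite pbf.
- move=> x; apply: perm_ext => a /=; by rewrite pfb.
Defined.
End SymDef.

Section SubG.
Variable G : group.
Variable P : G -> Prop.
Hypothesis HP : is_subgroup P.
Definition sub_mul (x y : {x : G | P x}) : {x : G | P x} :=
  exist _ (mul (proj1_sig x) (proj1_sig y)) (proj1 (proj2 HP) _ _ (proj2_sig x) (proj2_sig y)).
Definition sub_one : {x : G | P x} := exist _ one (proj1 HP).
Definition sub_inv (x : {x : G | P x}) : {x : G | P x} :=
  exist _ (inv (proj1_sig x)) (proj2 (proj2 HP) _ (proj2_sig x)).
Lemma sub_ext (x y : {x : G | P x}) : proj1_sig x = proj1_sig y -> x = y.
Proof. case: x y => [x px] [y py] /= E. subst y. f_equal. apply: proof_irrelevance. Qed.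
Definition SubG : group.
refine (@Group {x : G | P x} sub_mul sub_one sub_inv _ _ _ _ _);
  move=> *; apply: sub_ext => /=.
- apply: mulA.
- apply: mul1g.
- apply: mulg1.
- apply: mulVg.
- apply: mulgV.
Defined.
End SubG.

Section HNNgen.
Variables (H : group) (K : H -> Prop) (phi : H -> H) (G : group) (iota : H -> G) (t : G).
Hypothesis hnn : is_HNN K phi iota t.

Lemma hnn_gen (P : G -> Prop) : is_subgroup P -> (forall h, P (iota h)) -> P t ->
  forall g, P g.
Proof.
move=> HP Hi Ht.
case: hnn => hi [hrel huniv].
pose L := SubG HP.
pose f := fun h => (exist _ (iota h) (Hi h) : L).
pose s := (exist _ t Ht : L).
have hf : is_hom f.
  move=> x y. apply: sub_ext => /=. apply: hi.
have hrelf : forall k, K k -> conjg s (f k) = f (phi k).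
  move=> k Kk. apply: sub_ext => /=. by apply: hrel.
case: (huniv L f s hf hrelf) => F [[hF [hFi hFt]] _].
pose F' := fun g => proj1_sig (F g).
have hF' : is_hom F'.
  move=> x y. by rewrite /F' hF.
case: (huniv G iota t hi hrel) => F0 [_ uniq].
move=> g.
have E1 : g = F0 g.
  apply: (uniq (fun x => x)) => //.
have E2 : F' g = F0 g.
  apply: uniq => //.
  - move=> h. by rewrite /F' hFi.
  - by rewrite /F' hFt.
rewrite E1 -E2. exact: proj2_sig.
Qed.
End HNNgen.

Section HNNwords.
Variables (H : group) (K : H -> Prop) (phi psi : H -> H) (G : group) (iota : H -> G) (t : G).
Hypothesis hnn : is_HNN K phi iota t.
Hypothesis hphi : is_hom phi.
Hypothesis psiphi : forall x, psi (phi x) = x.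
Hypothesis phipsi : forall x, phi (psi x) = x.

Definition tpow (e : bool) : G := if e then t else inv t.

Fixpoint valL (l : list (bool * H)) : G :=
  match l with
  | nil => one
  | (e, h) :: l' => mul (tpow e) (mul (iota h) (valL l'))
  end.

Definition pinch (e : bool) (h : H) (e' : bool) : Prop :=
  (e = true /\ e' = false /\ K h) \/ (e = false /\ e' = true /\ K (psi h)).

Fixpoint red (l : list (bool * H)) : Prop :=
  match l with
  | nil => True
  | (e, h) :: l' =>
    match l' with
    | nil => True
    | (e', _) :: _ => ~ pinch e h e' /\ red l'
    end
  end.

Lemma hi : is_hom iota. Proof. by case: hnn. Qed.
Lemma hrel k : K k -> conjg t (iota k) = iota (phi k). Proof. case: hnn => _ [h _]. exact: h. Qed.

Definition Repr (g : G) := exists h0 l, red l /\ g = mul (iota h0) (valL l).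
Definition Q (g : G) := forall h0 l, red l -> Repr (mul g (mul (iota h0) (valL l))).

Lemma Q_one : Q one.
Proof. move=> h0 l rl. exists h0, l. by rewrite mul1g. Qed.
Lemma Q_mul g g' : Q g -> Q g' -> Q (mul g g').
Proof.
move=> qg qg' h0 l rl. case: (qg' h0 l rl) => h1 [l1 [rl1 E]].
rewrite -mulA E. exact: qg.
Qed.
Lemma Q_iota h : Q (iota h).
Proof. move=> h0 l rl. exists (mul h h0), l. split=> //. by rewrite (hi h h0) mulA. Qed.

Lemma Q_t e : Q (tpow e).
Proof.
move=> h0 l rl.
case: (classic (exists e' h1 l', l = (e', h1) :: l' /\ pinch e h0 e')).
- case=> e' [h1 [l' [El pin]]]. subst l.
  have rl' : red l'.
    move: rl => /=. case: l' => [|[??]?] //. by case.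
  case: pin => [[-> [-> Kh]]|[-> [-> Kh]]].
  + exists (mul (phi h0) h1), l'. split=> //=.
    rewrite (hi (phi h0) h1) -(hrel Kh) /conjg.
    by rewrite !mulA.
  + exists (mul (psi h0) h1), l'. split=> //=.
    have E : iota h0 = conjg t (iota (psi h0)) by rewrite hrel // phipsi.
    rewrite (hi (psi h0) h1) E /conjg.
    by rewrite !mulA mulVg mul1g mulgKV.
- move=> npin. exists one, ((e, h0) :: l). split.
  + move: rl npin. case: l => [|[e' h1] l'] //= rl npin. split=> // pin.
    apply: npin. by exists e', h1, l'.
  + by rewrite /= (hom1 hi) mul1g.
Qed.

Lemma all_repr g : Repr g.
Proof.
have : Q g /\ Q (inv g).
  apply: (hnn_gen hnn (P := fun g => Q g /\ Q (inv g))).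
  - split; first by rewrite inv1; split; exact: Q_one.
    split.
    + move=> x y [qx qx'] [qy qy']. split; first exact: Q_mul.
      rewrite invM. exact: Q_mul.
    + move=> x [qx qx']. by rewrite invK.
  - move=> h. split; first exact: Q_iota. rewrite -(homV hi). exact: Q_iota.
  - split; first exact: (Q_t true). exact: (Q_t false).
case=> qg _. have := qg one nil I. by rewrite /= (hom1 hi) !mulg1.
Qed.

End HNNwords.

Definition pick {T : Type} (d : T) (P : T -> Prop) : T := epsilon (inhabits d) P.
Lemma pickP {T : Type} (d : T) (P : T -> Prop) : (exists x, P x) -> P (pick d P).
Proof. exact: epsilon_spec. Qed.

Section FI.
Variable G : group.

Lemma fi_inter (A B : G -> Prop) : is_subgroup A -> is_subgroup B ->
  finite_index A -> finite_index B -> finite_index (fun x => A x /\ B x).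
Proof.
move=> [A1 [AM AV]] [B1 [BM BV]] [R1 HR1] [R2 HR2].
pose u r1 r2 := pick one (fun u => exists a b, A a /\ B b /\ u = mul r1 a /\ u = mul r2 b).
exists (flat_map (fun r1 => map (fun r2 => u r1 r2) R2) R1).
move=> x.
case: (HR1 x) => r1 [in1 [a [Aa Ea]]].
case: (HR2 x) => r2 [in2 [b [Bb Eb]]].
have : exists v, exists a b, A a /\ B b /\ v = mul r1 a /\ v = mul r2 b.
  exists x, a, b. by [].
move/(pickP one); rewrite -/(u r1 r2) => [[a' [b' [Aa' [Bb' [E1 E2]]]]]].
exists (u r1 r2). split.
  apply/in_flat_map. exists r1. split=> //. apply: in_map. done.
exists (mul (inv (u r1 r2)) x). split; last by rewrite mulKVg.
split.
- rewrite Ea E1 invM -mulA mulKg. apply: AM => //. exact: AV.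
- rewrite Eb E2 invM -mulA mulKg. apply: BM => //. exact: BV.
Qed.

Lemma preim_fi (L : group) (f : G -> L) (M : L -> Prop) : is_hom f -> is_subgroup M ->
  finite_index M -> finite_index (fun x => M (f x)).
Proof.
move=> hf [M1 [MM MV]] [R HR].
pose u r := pick one (fun h => exists m, M m /\ f h = mul r m).
exists (map u R) => x.
case: (HR (f x)) => r [inr [m [Mm E]]].
have : exists h, exists m, M m /\ f h = mul r m by exists x, m.
move/(pickP one); rewrite -/(u r) => [[m' [Mm' E']]].
exists (u r). split; first exact: in_map.
exists (mul (inv (u r)) x). split; last by rewrite mulKVg.
rewrite hf (homV hf) E' E invM -mulA mulKg. apply: MM => //. exact: MV.
Qed.

Lemma normal_inter (A B : G -> Prop) : is_normal A -> is_normal B -> is_normal (fun x => A x /\ B x).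
Proof.
move=> [[A1 [AM AV]] AJ] [[B1 [BM BV]] BJ].
split; first split=> //.
- split; first by move=> x y [? ?] [? ?]; split; auto.
  move=> x [? ?]; split; auto.
- move=> g x [? ?]; split; auto.
Qed.

Lemma normal_preim (L : group) (f : G -> L) (M : L -> Prop) : is_hom f -> is_normal M ->
  is_normal (fun x => M (f x)).
Proof.
move=> hf [[M1 [MM MV]] MJ].
split; first split.
- by rewrite (hom1 hf).
- split; first by move=> x y ? ?; rewrite hf; auto.
  move=> x ?; rewrite (homV hf); auto.
- move=> g x ?. rewrite (homJ hf). auto.
Qed.
End FI.

Lemma inv_hom (H : group) (phi psi : H -> H) : is_hom phi ->
  (forall x, psi (phi x) = x) -> (forall x, phi (psi x) = x) -> is_hom psi.
Proof.
move=> hphi e1 e2 x y.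
by rewrite -{1}(e2 x) -{1}(e2 y) -hphi e1.
Qed.

Section Rep.
Variables (H : group) (K : H -> Prop) (phi psi : H -> H) (G : group) (iota : H -> G) (t : G).
Hypothesis hnn : is_HNN K phi iota t.
Hypothesis hphi : is_hom phi.
Hypothesis psiphi : forall x, psi (phi x) = x.
Hypothesis phipsi : forall x, phi (psi x) = x.
Variable A : Type.
Variable sigma : H -> Perm A.
Hypothesis hsigma : forall k x, K k -> sigma (mul k x) = sigma x.

Definition X := (H * A)%type.

Definition fH (h : H) : Perm X.
refine (@MkPerm X (fun p => (mul h p.1, p.2)) (fun p => (mul (inv h) p.1, p.2)) _ _).
- move=> [x a] /=. by rewrite mulKVg.
- move=> [x a] /=. by rewrite mulKg.
Defined.

Definition sT : Perm X.
refine (@MkPerm X (fun p => (phi p.1, pf (sigma p.1) p.2))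
                  (fun p => (psi p.1, pb (sigma (psi p.1)) p.2)) _ _).
- move=> [x a] /=. by rewrite phipsi pfb.
- move=> [x a] /=. by rewrite psiphi pbf.
Defined.

Lemma rep_exists : exists rho : G -> SymG X, is_hom rho /\
  (forall h, rho (iota h) = fH h) /\ rho t = sT.
Proof.
case: hnn => _ [_ huniv].
have hf : is_hom (fun h => fH h : SymG X).
  move=> x y. apply: perm_ext => [[p a]] /=. by rewrite mulA.
have hrel : forall k, K k -> conjg (sT : SymG X) (fH k : SymG X) = fH (phi k).
  move=> k Kk. apply: perm_ext => [[y a]] /=.
  rewrite hphi phipsi hsigma // pfb. done.
case: (huniv (SymG X) (fun h => fH h) sT hf hrel) => F [[hF [hFi hFt]] _].
by exists F.
Qed.
End Rep.

Section Forward.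
Variables (H : group) (K : H -> Prop) (phi psi : H -> H) (G : group) (iota : H -> G) (t : G).
Hypothesis hnn : is_HNN K phi iota t.
Hypothesis hphi : is_hom phi.
Hypothesis psiphi : forall x, psi (phi x) = x.
Hypothesis phipsi : forall x, phi (psi x) = x.
Hypothesis HK : is_subgroup K.

Lemma iota_inj x y : iota x = iota y -> x = y.
Proof.
move=> E.
have [rho [hr [hri hrt]]] := @rep_exists H K phi psi G iota t hnn hphi psiphi phipsi unit
   (fun _ => pone unit) (fun _ _ _ => erefl).
have := f_equal (fun g => pf (rho g) (one, tt)) E.
rewrite /= !hri /= !mulg1. by case.
Qed.

Definition negP : Perm bool := @MkPerm bool negb negb negbK negbK.

Definition sigK (x : H) : Perm bool :=
  if excluded_middle_informative (K x) then negP else pone bool.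

Lemma sigK_K k x : K k -> sigK (mul k x) = sigK x.
Proof.
move=> Kk. case: HK => [K1 [KM KV]].
rewrite /sigK.
case: (excluded_middle_informative (K (mul k x))) => h1;
case: (excluded_middle_informative (K x)) => h2 //.
- exfalso; apply: h2. rewrite -(mulKg k x). by apply: KM; auto.
- exfalso; apply: h1. by apply: KM.
Qed.

Lemma conj_sep n : ~ K n -> conjg t (iota n) <> iota (phi n).
Proof.
move=> nK E.
have [rho [hr [hri hrt]]] := @rep_exists H K phi psi G iota t hnn hphi psiphi phipsi bool
   sigK sigK_K.
have := f_equal (fun g => pf (rho g) (one, true)) E.
rewrite /conjg !hr (homV hr) !hri hrt /=.
have p1 : psi one = one by rewrite -{1}(hom1 hphi) psiphi.
rewrite p1 !mulg1 /sigK.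
case: (excluded_middle_informative (K one)) => h1; last by exfalso; apply: h1; case: HK.
case: (excluded_middle_informative (K n)) => h2 //=.
Qed.

Lemma RF_sub : residually_finite G -> residually_finite H.
Proof.
move=> rf h nh.
have hi := hi hnn.
have : iota h <> one.
  move=> E. apply: nh. apply: iota_inj. by rewrite E (hom1 hi).
case/rf => M [nM [fM nMh]].
exists (fun x => M (iota x)). split; first exact: normal_preim.
split=> //. apply: preim_fi => //. by case: nM.
Qed.

Lemma RF_quot (N : H -> Prop) (HN : is_subgroup N) :
  residually_finite G -> forall (Q : group) (pi : H -> Q), is_quotient_by N K pi ->
  residually_finite Q.
Proof.
move=> rf Q pi [piM [piS piK]] q nq.
have hi := hi hnn.
case: HN => [N1 [NM NV]].
case: HK => [K1 [KM KV]].
have pi1 : pi one = one.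
  have E := piM one one N1 N1. rewrite mul1g in E.
  apply: (@mulg_injl _ (pi one)). by rewrite -E mulg1.
have piV : forall y, N y -> pi (inv y) = inv (pi y).
  move=> y Ny. symmetry. apply: inv_uniq. by rewrite -piM ?mulgV //; auto.
case: (piS q) => n [Nn En]. subst q.
have nK : ~ K n by move=> Kn; apply: nq; apply/piK.
pose w := mul (conjg t (iota n)) (inv (iota (phi n))).
have nw : w <> one.
  move=> Ew. apply: (conj_sep nK). exact: eq_mulgV.
case: (rf w nw) => M [nM [fM nMw]].
pose L := fun x => M (iota x) /\ M (iota (phi x)).
have nL : is_normal L.
  apply: normal_inter; first exact: normal_preim.
  apply: (normal_preim (f := fun x => iota (phi x))) => //.
  exact: is_hom_comp.
have fL : finite_index L.
  apply: fi_inter.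
  - by case: (normal_preim hi nM).
  - case: (normal_preim (f := fun x => iota (phi x)) (is_hom_comp hphi hi) nM) => //.
  - apply: preim_fi => //; by case: nM.
  - apply: (preim_fi (f := fun x => iota (phi x))) => //; first exact: is_hom_comp.
    by case: nM.
case: nL => [[L1 [LM LV]] LJ].
exists (fun q => exists y, N y /\ L y /\ pi y = q).
split; first split; first split.
- exists one. by [].
- split.
  + move=> _ _ [y1 [Ny1 [Ly1 <-]]] [y2 [Ny2 [Ly2 <-]]].
    exists (mul y1 y2). split; first by auto. split; first by auto. by rewrite piM.
  + move=> _ [y [Ny [Ly <-]]]. exists (inv y). split; first by auto. split; first by auto.
    by rewrite piV.
- move=> g _ [y [Ny [Ly <-]]].
  case: (piS g) => x [Nx <-].
  exists (conjg x y).
  have Nxy : N (conjg x y) by rewrite /conjg; auto.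
  split=> //. split; first by auto.
  by rewrite /conjg !piM ?piV //; auto.
split.
- case: fL => R HR.
  pose u r := pick one (fun u => N u /\ exists l, L l /\ u = mul r l).
  exists (map (fun r => pi (u r)) R).
  move=> q. case: (piS q) => x [Nx <-].
  case: (HR x) => r [inR [l [Ll Ex]]].
  have : exists u, N u /\ exists l, L l /\ u = mul r l by exists x; split=> //; exists l.
  move/(pickP one); rewrite -/(u r) => [[Nu [l' [Ll' Eu]]]].
  exists (pi (u r)). split; first exact: (in_map (fun r => pi (u r))).
  exists (pi (mul (inv (u r)) x)). split.
  + exists (mul (inv (u r)) x). split; first by auto.
    split=> //. rewrite Eu Ex invM -mulA mulKg. by auto.
  + by rewrite -piM ?mulKVg //; auto.
- move=> [y [Ny [Ly Ey]]].
  have Kk : K (mul (inv y) n).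
    apply/piK; first by auto.
    by rewrite piM ?piV ?Ey ?mulVg //; auto.
  apply: nMw.
  set k := mul (inv y) n in Kk.
  have En : n = mul y k by rewrite /k mulKVg.
  clearbody k.
  have Ew : w = mul (conjg t (iota y)) (inv (iota (phi y))).
    rewrite /w En !hi hphi hi /conjg -(hrel hnn Kk) /conjg !invM !mulA.
    by rewrite !mulgK.
  rewrite Ew.
  case: Ly => My Mpy.
  case: nM => [[M1 [MM MV]] MJ].
  apply: MM; first exact: MJ.
  exact: MV.
Qed.
End Forward.

Lemma conjgM (G : group) (a x y : G) : conjg a (mul x y) = mul (conjg a x) (conjg a y).
Proof. by rewrite /conjg !mulA mulgKV. Qed.
Lemma conjgMa (G : group) (a b x : G) : conjg (mul a b) x = conjg a (conjg b x).
Proof. by rewrite /conjg invM !mulA. Qed.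
Lemma conjg1 (G : group) (x : G) : conjg one x = x.
Proof. by rewrite /conjg inv1 mulg1 mul1g. Qed.
Lemma conjgK (G : group) (a x : G) : conjg (inv a) (conjg a x) = x.
Proof. by rewrite -conjgMa mulVg conjg1. Qed.
Lemma conjgKV (G : group) (a x : G) : conjg a (conjg (inv a) x) = x.
Proof. by rewrite -conjgMa mulgV conjg1. Qed.

Lemma fi_ext (G : group) (A B : G -> Prop) : (forall x, A x <-> B x) -> finite_index A -> finite_index B.
Proof.
move=> E. have -> : B = A; last done.
apply: functional_extensionality => x. apply: propositional_extensionality. by split; apply E.
Qed.

Section Norm.
Variables (H : group) (K : H -> Prop).
Hypothesis HK : is_subgroup K.

Lemma norm_sub : is_subgroup (normalizer K).
Proof.
split; first by move=> k; rewrite conjg1.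
split.
- move=> x y nx ny k. rewrite conjgMa. split.
  + move=> Kk. apply: (proj1 (nx _)). exact: (proj1 (ny _)).
  + move=> Kk. apply: (proj2 (ny _)). exact: (proj2 (nx _)).
- move=> x nx k. split.
  + move=> Kk. apply: (proj2 (nx _)). by rewrite conjgKV.
  + move=> Kk. have := (proj1 (nx (conjg (inv x) k))). by rewrite conjgKV; auto.
Qed.

Lemma K_norm k : K k -> normalizer K k.
Proof.
case: HK => [K1 [KM KV]] Kk k'. rewrite /conjg. split.
- move=> Kk'. apply: (KM); [apply: (KM) | apply: (KV)] => //.
- move=> E. have := KM _ _ (KM _ _ (KV _ Kk) E) Kk.
  by rewrite !mulA mulVg mul1g mulgKV.
Qed.
End Norm.

Section Quot.
Variables (H : group) (N K : H -> Prop).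
Hypothesis HK : is_subgroup K.
Hypothesis HN : is_subgroup N.
Hypothesis KN : forall k, K k -> N k.
Hypothesis NK : forall x k, N x -> K k -> K (conjg x k).

Definition coset (x : H) : H -> Prop := fun y => K (mul (inv x) y).
Definition Qc := {S : H -> Prop | exists x, N x /\ S = coset x}.

Lemma coset_eq x y : K (mul (inv x) y) -> coset x = coset y.
Proof.
case: HK => [K1 [KM KV]] Kxy.
apply: functional_extensionality => z. apply: propositional_extensionality.
rewrite /coset. split=> Kz.
- have := KM _ _ (KV _ Kxy) Kz. by rewrite invM invK -mulA mulKVg.
- have := KM _ _ Kxy Kz. by rewrite -mulA mulKVg.
Qed.

Lemma coset_eqK x y : coset x = coset y -> K (mul (inv x) y).
Proof.
case: HK => [K1 [KM KV]] E.
have : coset y y by rewrite /coset mulVg.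
rewrite -E. done.
Qed.

Definition rep (S : Qc) : H := pick one (fun x => N x /\ proj1_sig S = coset x).
Lemma repP S : N (rep S) /\ proj1_sig S = coset (rep S).
Proof. exact: (@pickP _ one _ (proj2_sig S)). Qed.

Definition mkQ (x : H) (Nx : N x) : Qc := exist _ (coset x) (ex_intro _ x (conj Nx erefl)).

Lemma Qc_ext (S T : Qc) : proj1_sig S = proj1_sig T -> S = T.
Proof. case: S T => [S pS] [T pT] /= E. subst. f_equal. apply: proof_irrelevance. Qed.

Definition qmul (S T : Qc) : Qc :=
  mkQ (proj1 (proj2 HN) _ _ (proj1 (repP S)) (proj1 (repP T))).
Definition qone : Qc := mkQ (proj1 HN).
Definition qinv (S : Qc) : Qc := mkQ (proj2 (proj2 HN) _ (proj1 (repP S))).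

Lemma NV x : N x -> N (inv x). Proof. by case: HN => _ [_ ?]; auto. Qed.
Lemma NM x y : N x -> N y -> N (mul x y). Proof. by case: HN => _ [? _]; auto. Qed.

Lemma coset_mul x x' y y' : N x -> N y -> K (mul (inv x) x') -> K (mul (inv y) y') ->
  K (mul (inv (mul x y)) (mul x' y')).
Proof.
case: HK => [K1 [KM KV]] Nx Ny Kx Ky.
have E : mul (inv (mul x y)) (mul x' y') =
         mul (conjg (inv y) (mul (inv x) x')) (mul (inv y) y').
  by rewrite /conjg invK invM !mulA mulgK.
rewrite E. apply: KM => //. apply: NK => //. exact: NV.
Qed.

Lemma rep_coset x (Nx : N x) : K (mul (inv x) (rep (mkQ Nx))).
Proof.
case: (repP (mkQ Nx)) => _ /= E. apply: coset_eqK. done.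
Qed.

Lemma rep_cosetS (S : Qc) x : proj1_sig S = coset x -> K (mul (inv x) (rep S)).
Proof. move=> E. case: (repP S) => _ E'. apply: coset_eqK. by rewrite -E -E'. Qed.

Lemma qmulE S T : proj1_sig (qmul S T) = coset (mul (rep S) (rep T)). Proof. by []. Qed.
Lemma qoneE : proj1_sig qone = coset one. Proof. by []. Qed.
Lemma qinvE S : proj1_sig (qinv S) = coset (inv (rep S)). Proof. by []. Qed.
Lemma repS S : proj1_sig S = coset (rep S). Proof. exact: (proj2 (repP S)). Qed.
Lemma repN S : N (rep S). Proof. exact: (proj1 (repP S)). Qed.

Lemma Krefl x : K (mul (inv x) x). Proof. rewrite mulVg. by case: HK. Qed.
Lemma Ksym x y : K (mul (inv x) y) -> K (mul (inv y) x).
Proof. case: HK => [_ [_ KV]] h. have := KV _ h. by rewrite invM invK. Qed.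

Definition QuotG : group.
refine (@Group Qc qmul qone qinv _ _ _ _ _).
- move=> a b c. apply: Qc_ext. rewrite !qmulE. apply: coset_eq.
  case: HK => [K1 [KM KV]].
  have h1 := rep_cosetS (qmulE b c). have h2 := rep_cosetS (qmulE a b).
  move: h1 h2.
  set q1 := rep (qmul b c). set q2 := rep (qmul a b).
  set ra := rep a. set rb := rep b. set rc := rep c.
  move=> h1 h2.
  have Na : N ra := repN a. have Nb : N rb := repN b. have Nc : N rc := repN c.
  have Nab : N (mul ra rb) by apply: NM.
  have Nbc : N (mul rb rc) by apply: NM.
  have := coset_mul (x := ra) (x' := ra) Na Nbc _ h1.
  rewrite mulVg => /(_ K1) h3.
  have := coset_mul (x := mul ra rb) (y := rc) (y' := rc) Nab Nc h2.
  rewrite mulVg => /(_ K1) h4.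
  have := KM _ _ (KV _ h3) h4. by rewrite (mulA ra rb rc) invM invK -mulA mulKVg.
- move=> a. apply: Qc_ext. rewrite qmulE repS. apply: coset_eq.
  have h := rep_cosetS qoneE.
  have := @coset_mul one (rep qone) (rep a) (rep a) (proj1 HN) (repN a) h (Krefl _).
  move/Ksym. by rewrite mul1g.
- move=> a. apply: Qc_ext. rewrite qmulE repS. apply: coset_eq.
  have h := rep_cosetS qoneE.
  have := @coset_mul (rep a) (rep a) one (rep qone) (repN a) (proj1 HN) (Krefl _) h.
  move/Ksym. by rewrite mulg1.
- move=> a. apply: Qc_ext. rewrite qmulE qoneE. apply: coset_eq.
  have h := rep_cosetS (qinvE a).
  have := @coset_mul (inv (rep a)) (rep (qinv a)) (rep a) (rep a) (NV (repN a)) (repN a) h (Krefl _).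
  move/Ksym. by rewrite mulVg.
- move=> a. apply: Qc_ext. rewrite qmulE qoneE. apply: coset_eq.
  have h := rep_cosetS (qinvE a).
  have := @coset_mul (rep a) (rep a) (inv (rep a)) (rep (qinv a)) (repN a) (NV (repN a)) (Krefl _) h.
  move/Ksym. by rewrite mulgV.
Defined.

Definition qpi (x : H) : QuotG :=
  match excluded_middle_informative (N x) with
  | left Nx => mkQ Nx
  | right _ => qone
  end.

Lemma qpiE x (Nx : N x) : qpi x = mkQ Nx.
Proof.
rewrite /qpi. case: excluded_middle_informative => [p|nx]; first by rewrite (proof_irrelevance _ p Nx). by exfalso; apply: nx.
Qed.

Lemma qpi_quot : is_quotient_by N K qpi.
Proof.
case: HK => [K1 [KM KV]].
split.
- move=> x y Nx Ny. rewrite (qpiE Nx) (qpiE Ny) (qpiE (NM Nx Ny)).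
  apply: Qc_ext => /=. apply: coset_eq.
  apply: coset_mul => //; exact: rep_coset.
split.
- move=> q. exists (rep q). case: (repP q) => Nq E. split=> //.
  rewrite (qpiE Nq). apply: Qc_ext => /=. by rewrite E.
- move=> x Nx. rewrite (qpiE Nx). split.
  + move=> E. have := f_equal (@proj1_sig _ _) E => /= E'.
    have := coset_eqK E'. rewrite mulg1 => Kx. have := KV _ Kx. by rewrite invK.
  + move=> Kx. apply: Qc_ext => /=. apply: coset_eq. by rewrite mulg1; apply: KV.
Qed.
End Quot.

Lemma subgroup_true (H : group) : is_subgroup (fun _ : H => True).
Proof. by split. Qed.

Lemma fi_true (H : group) : finite_index (fun _ : H => True).
Proof. exists (one :: nil) => x. exists one. split; first by left. exists x. by rewrite mul1g. Qed.

Lemma sub_inter (H : group) (A B : H -> Prop) : is_subgroup A -> is_subgroup B ->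
  is_subgroup (fun x => A x /\ B x).
Proof.
move=> [A1 [AM AV]] [B1 [BM BV]]. split=> //. split.
- move=> x y [? ?] [? ?]; split; auto.
- move=> x [? ?]; split; auto.
Qed.

Lemma fi_inter_nat (H : group) (P : nat -> H -> Prop) p :
  (forall q, q < p -> is_subgroup (P q) /\ finite_index (P q)) ->
  is_subgroup (fun x => forall q, q < p -> P q x) /\ finite_index (fun x => forall q, q < p -> P q x).
Proof.
elim: p => [|p IH] hP.
- split.
  + split; first by move=> q; lia. split; move=> *; lia.
  + apply: (fi_ext (A := fun _ => True)); last exact: fi_true.
    move=> x; split=> // _ q; lia.
- have [s1 f1] : is_subgroup (fun x => forall q, q < p -> P q x) /\ finite_index (fun x => forall q, q < p -> P q x).
    apply: IH => q qp. apply: hP. lia.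
  have [s2 f2] := hP p (le_n _).
  split.
  + apply: (@eq_ind _ (fun x => (forall q, q < p -> P q x) /\ P p x)); first exact: sub_inter.
    apply: functional_extensionality => x. apply: propositional_extensionality.
    split.
    * move=> [h1 h2] q qp. case: (Nat.eq_dec q p) => [->|ne] //. apply: h1. lia.
    * move=> h. split; first by move=> q qp; apply: h; lia. apply: h. lia.
  + apply: (fi_ext (A := fun x => (forall q, q < p -> P q x) /\ P p x)); last exact: fi_inter.
    move=> x. split.
    * move=> [h1 h2] q qp. case: (Nat.eq_dec q p) => [->|ne] //. apply: h1. lia.
    * move=> h. split; first by move=> q qp; apply: h; lia. apply: h. lia.
Qed.

Lemma sub_preim (G L : group) (f : G -> L) (M : L -> Prop) : is_hom f -> is_subgroup M ->
  is_subgroup (fun x => M (f x)).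
Proof.
move=> hf [M1 [MM MV]]. split; first by rewrite (hom1 hf).
split; first by move=> x y ? ?; rewrite hf; auto.
move=> x ?; rewrite (homV hf); auto.
Qed.

Lemma conj_hom (H : group) (a : H) : is_hom (conjg a).
Proof. move=> x y. exact: conjgM. Qed.

Lemma core_exists (H : group) (P : H -> Prop) : is_subgroup P -> finite_index P ->
  exists L, is_normal L /\ finite_index L /\ forall x, L x -> P x.
Proof.
move=> sP fP.
have [P1 [PM PV]] := sP.
case: (fP) => R HR.
exists (fun x => forall g, P (conjg g x)).
split; last split.
- split; first split.
  + move=> g. by rewrite /conjg mulg1 mulgV.
  + split.
    * move=> x y hx hy g. rewrite conjgM. auto.
    * move=> x hx g. rewrite (homV (conj_hom g)). auto.
  + move=> a x hx g. rewrite -conjgMa. auto.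
- pose Pq := fun q x => P (conjg (inv (List.nth q R one)) x).
  have [_ fI] := @fi_inter_nat H Pq (length R) (fun q _ =>
     conj (sub_preim (conj_hom _) sP) (preim_fi (conj_hom _) sP fP)).
  apply: fi_ext fI => x. split.
  + move=> h g.
    case: (HR (inv g)) => r [inr [m [Pm Em]]].
    case: (In_nth R r one inr) => q [qlt Eq].
    have := h q qlt. rewrite /Pq Eq => h'.
    have -> : g = mul (inv m) (inv r) by rewrite -invM -Em invK.
    rewrite conjgMa /conjg invK. rewrite /conjg invK in h'. apply: (PM); first apply: (PM); auto.
  + move=> h q _. exact: h.
- move=> x hx. have := hx one. by rewrite conjg1.
Qed.

Section Sep.
Variables (H : group) (K : H -> Prop).
Hypothesis HK : is_subgroup K.
Hypothesis fiN : finite_index (normalizer K).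
Hypothesis qrf : quotient_residually_finite (normalizer K) K.

Lemma sep h : ~ K h -> exists P, is_subgroup P /\ finite_index P /\
  (forall k, K k -> P k) /\ ~ P h.
Proof.
move=> nKh.
set N := normalizer K.
have sN : is_subgroup N := norm_sub K.
case: (classic (N h)) => Nh; last first.
  exists N. split=> //. split=> //. split=> //. exact: K_norm.
have NK : forall x k, N x -> K k -> K (conjg x k).
  move=> x k Nx Kk. exact: (proj1 (Nx k)).
have hq := qpi_quot HK sN NK.
set pi := qpi _ _ _ in hq.
have rfQ := qrf hq.
case: hq => [piM [piS piK]].
have [N1 [NM NV]] := sN.
have pi1 : pi one = one.
  have E := piM one one N1 N1. rewrite mul1g in E.
  apply: (@mulg_injl _ (pi one)). by rewrite -E mulg1.
have piV : forall y, N y -> pi (inv y) = inv (pi y).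
  move=> y Ny. symmetry. apply: inv_uniq. by rewrite -piM ?mulgV //; auto.
have npi : pi h <> one by move=> E; apply: nKh; apply/piK.
case: (rfQ _ npi) => S [[[S1 [SM SV]] SJ] [[RS HRS] nS]].
exists (fun x => N x /\ S (pi x)).
split; last split; last split.
- split; first by rewrite pi1.
  split.
  + move=> x y [Nx Sx] [Ny Sy]. split; first by auto. rewrite piM; auto.
  + move=> x [Nx Sx]. split; first by auto. rewrite piV; auto.
- case: fiN => RN HRN.
  pose u s := pick one (fun u => N u /\ pi u = s).
  exists (flat_map (fun r => map (fun s => mul r (u s)) RS) RN).
  move=> x.
  case: (HRN x) => r [inr [n [Nn En]]].
  case: (HRS (pi n)) => s [ins [sg [Ssg Esg]]].
  have : exists v, N v /\ pi v = s by case: (piS s) => v ?; exists v.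
  move/(@pickP _ one); rewrite -/(u s) => [[Nu Eu]].
  exists (mul r (u s)). split.
    apply/in_flat_map. exists r. split=> //. exact: (in_map (fun s => mul r (u s))).
  exists (mul (inv (u s)) n). split; last by rewrite -mulA mulKVg.
  split; first by auto.
  rewrite piM ?piV ?Eu ?Esg ?mulKg //; auto.
- move=> k Kk. split; first exact: K_norm. have -> : pi k = one by apply/piK => //; exact: K_norm.
  done.
- move=> [_ Sh]. exact: nS.
Qed.
End Sep.

End P1.
Import P1.

From mathcomp Require Import eqtype ssrnat seq fintype finfun fingroup perm zify.
Import Pilot.Defs.
Import P1.

Module P2.

Section Idx.
Variables (H : group) (L : H -> Prop) (R : list H).
Hypothesis HR : forall x : H, exists r, In r R /\ exists m, L m /\ x = mul r m.
Hypothesis nL : is_normal L.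

Definition idx (x : H) : 'I_(length R).+1 :=
  pick ord0 (fun j : 'I_(length R).+1 => L (mul (inv (List.nth j R one)) x)).

Lemma idxP x : L (mul (inv (List.nth (idx x) R one)) x).
Proof.
rewrite /idx. apply: (@pickP _ ord0 (fun j : 'I_(length R).+1 => L (mul (inv (List.nth j R one)) x))).
case: (HR x) => r [inr [m [Lm E]]].
case: (In_nth R r one inr) => q [qlt Eq].
have qlt' : q < (length R).+1 by apply/ltP; lia.
exists (Ordinal qlt') => /=. by rewrite Eq E mulKg.
Qed.

Lemma idx_eq x y : idx x = idx y -> L (mul (inv x) y).
Proof.
move=> E. have h1 := idxP x. have h2 := idxP y. rewrite -E in h2.
case: nL => [[L1 [LM LV]] _].
have := LM _ _ (LV _ h1) h2. by rewrite invM invK -mulA mulKVg.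
Qed.
End Idx.

Section PhiInv.
Variables (H : group) (phi psi : H -> H).
Hypothesis hphi : is_hom phi.
Hypothesis psiphi : forall x, psi (phi x) = x.
Hypothesis phipsi : forall x, phi (psi x) = x.
Hypothesis fg : finitely_generated H.

Lemma hpsi : is_hom psi. Proof. exact: inv_hom. Qed.
Lemma hiter n : is_hom (iter n psi).
Proof. elim: n => [|n IH] x y //=. by rewrite IH hpsi. Qed.
Lemma iter_psiphi n y : iter n psi (iter n phi y) = y.
Proof. elim: n => [|n IH] //. by rewrite iterSr iterS psiphi IH. Qed.

Lemma phi_inv_core L : is_normal L -> finite_index L ->
  exists L', is_normal L' /\ finite_index L' /\ (forall x, L' x -> L x) /\
    (forall x, L' x -> L' (phi x)) /\ (forall x, L' x -> L' (psi x)).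
Proof.
move=> nL fL.
case: (fL) => R HR.
case: fg => S hS.
pose T := {ffun 'I_(length S) -> 'I_(length R).+1}.
pose code (j : nat) : T := [ffun i : 'I_(length S) => @idx _ L R (iter j psi (List.nth i S one))].
have : ~ injective (fun i : 'I_#|T|.+1 => code i).
  move=> inj. have := leq_card _ inj. by rewrite card_ord ltnn.
move=> ninj.
have [a [b [ab Eab]]] : exists a b, (a < b)%coq_nat /\ code a = code b.
  apply: NNPP => hn. apply: ninj => i j Eij.
  apply: val_inj => /=.
  case: (Nat.lt_trichotomy i j) => [h|[h|h]] //; exfalso; apply: hn.
  - by exists i, j.
  - by exists j, i.
have key : forall h, L (mul (inv (iter a psi h)) (iter b psi h)).
  apply: hS.
  - case: nL => [[L1 [LM LV]] LJ]. split.
    + by rewrite !(hom1 (hiter _)) inv1 mul1g.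
    split.
    + move=> x y hx hy. rewrite !(hiter _ x y) invM.
      set ax := iter a psi x. set ay := iter a psi y. set bx := iter b psi x. set b_y := iter b psi y.
      have -> : mul (mul (inv ay) (inv ax)) (mul bx b_y) =
                mul (mul (inv ay) b_y) (conjg (inv b_y) (mul (inv ax) bx)).
        by rewrite /conjg invK !mulA mulgK.
      apply: LM => //. exact: LJ.
    + move=> x hx. rewrite !(homV (hiter _)) invK.
      have -> : mul (iter a psi x) (inv (iter b psi x)) =
                conjg (iter b psi x) (inv (mul (inv (iter a psi x)) (iter b psi x))).
        by rewrite /conjg invM invK !mulA mulgV mul1g.
      apply: LJ. exact: LV.
  - move=> x inx.
    case: (In_nth S x one inx) => q [qlt Eq].
    have qlt' : q < length S by apply/ltP.
    have := f_equal (fun f : T => f (Ordinal qlt')) Eab.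
    rewrite /code !ffunE /= Eq. by move/(@idx_eq _ L R HR nL).
pose p := (b - a)%coq_nat.
have p_pos : (0 < p)%coq_nat by rewrite /p; lia.
have Lp : forall y, L y <-> L (iter p psi y).
  move=> y. have := key (iter a phi y).
  have Eb : b = (p + a)%coq_nat by rewrite /p; lia.
  rewrite Eb plusE iterD !iter_psiphi => hy.
  case: nL => [[L1 [LM LV]] LJ]. split=> h.
  - have := LM _ _ h hy. by rewrite mulKVg.
  - have := LM _ _ h (LV _ hy). by rewrite invM invK mulKVg.
exists (fun y => forall q, (q < p)%coq_nat -> L (iter q psi y)).
split; last split; last split; last split.
- case: nL => [[L1 [LM LV]] LJ]. split; first split.
  + move=> q _. by rewrite (hom1 (hiter _)).
  + split.
    * move=> x y hx hy q qp. rewrite (hiter _ x y). auto.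
    * move=> x hx q qp. rewrite (homV (hiter _)). auto.
  + move=> g x hx q qp. rewrite (homJ (hiter _)). auto.
- have := @fi_inter_nat H (fun q y => L (iter q psi y)) p.
  case.
  + move=> q _. split.
    * apply: sub_preim; first exact: hiter. by case: nL.
    * apply: preim_fi; first exact: hiter. by case: nL. done.
  + done.
- move=> x hx. exact: (hx 0 p_pos).
- move=> x hx q qp. case: q qp => [|q] qp.
  + rewrite /=. apply: (proj2 (Lp _)). have -> : p = (p.-1).+1 by lia.
    rewrite iterSr psiphi. apply: hx. lia.
  + rewrite iterSr psiphi. apply: hx. lia.
- move=> x hx q qp. rewrite -iterSr.
  case: (Nat.eq_dec q.+1 p) => [E|ne].
  + rewrite E. apply: (proj1 (Lp x)). exact: (hx 0 p_pos).
  + apply: hx. lia.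
Qed.
End PhiInv.

Lemma inseq_In (T : eqType) (x : T) (s : seq T) : x \in s -> List.In x s.
Proof.
elim: s => [|y s IH] //. rewrite in_cons => /orP [/eqP ->|h]; [by left | right; exact: IH].
Qed.

Lemma perm_ext_rel (T : finType) (R : T -> T -> Prop) :
  (forall a b b', R a b -> R a b' -> b = b') ->
  (forall a a' b, R a b -> R a' b -> a = a') ->
  exists s : {perm T}, forall a b, R a b -> s a = b.
Proof.
move=> fR iR.
suff : forall l : seq T, exists s : {perm T}, forall a, a \in l -> forall b, R a b -> s a = b.
  case/(_ (enum T)) => s hs. exists s => a b. apply: hs. by rewrite mem_enum.
elim=> [|x l [s hs]].
  exists 1%g => a. by rewrite in_nil.
case: (classic (exists b, R x b)) => [[b Rxb]|nx].
- exists (s * tperm (s x) b)%g => a.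
  move=> inal c Rc.
  case: (eqVneq a x) inal Rc => [->|ne] inal Rc.
  + rewrite permM tpermL. exact: fR _ _ _ Rxb Rc.
  + have ina : a \in l by move: inal; rewrite in_cons (negbTE ne).
    rewrite permM (hs a ina c Rc) tpermD //.
    * apply/eqP => E. move/eqP: ne; apply. apply: (perm_inj (s:=s)). by rewrite (hs a ina c Rc) E.
    * apply/eqP => E. move/eqP: ne; apply. apply: (iR _ _ _ Rc). by rewrite -E.
- exists s => a. rewrite in_cons => /orP [/eqP ->|ina] b Rb.
  + exfalso; apply: nx; by exists b.
  + exact: hs.
Qed.

Section Main.
Variables (H : group) (K : H -> Prop) (phi psi : H -> H) (G : group) (iota : H -> G) (t : G).
Hypothesis hnn : is_HNN K phi iota t.
Hypothesis hphi : is_hom phi.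
Hypothesis psiphi : forall x, psi (phi x) = x.
Hypothesis phipsi : forall x, phi (psi x) = x.
Hypothesis HK : is_subgroup K.
Variable L : H -> Prop.
Hypothesis nL : is_normal L.
Hypothesis fL : finite_index L.
Hypothesis Lphi : forall x, L x -> L (phi x).
Hypothesis Lpsi : forall x, L x -> L (psi x).

Definition KL (x : H) := exists k m, K k /\ L m /\ x = mul k m.

Lemma KL_sub : is_subgroup KL.
Proof.
case: HK => [K1 [KM KV]]. case: nL => [[L1 [LM LV]] LJ].
split; first by exists one, one; rewrite mulg1.
split.
- move=> _ _ [k1 [m1 [Kk1 [Lm1 ->]]]] [k2 [m2 [Kk2 [Lm2 ->]]]].
  exists (mul k1 k2), (mul (conjg (inv k2) m1) m2). split; first by auto.
  split; first by apply: (LM); auto.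
  by rewrite /conjg invK !mulA mulgK.
- move=> _ [k [m [Kk [Lm ->]]]].
  exists (inv k), (conjg k (inv m)). split; first by auto. split; first by auto.
  by rewrite /conjg invM !mulA mulVg mul1g.
Qed.

Lemma K_KL k : K k -> KL k.
Proof. move=> Kk. exists k, one. split=> //. split; first by case: nL => [[]]. by rewrite mulg1. Qed.
Lemma L_KL m : L m -> KL m.
Proof. move=> Lm. exists one, m. split; first by case: HK. by rewrite mul1g. Qed.

Definition cls (y x : H) := KL (mul y (inv x)).
Lemma cls_refl x : cls x x.
Proof. rewrite /cls mulgV. by case: KL_sub. Qed.
Lemma cls_sym x y : cls x y -> cls y x.
Proof. rewrite /cls => h. have := proj2 (proj2 KL_sub) _ h. by rewrite invM invK. Qed.
Lemma cls_trans x y z : cls x y -> cls y z -> cls x z.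
Proof. rewrite /cls => h1 h2. have := proj1 (proj2 KL_sub) _ _ h1 h2. by rewrite -mulA mulKg. Qed.

Fixpoint traj (l : list (bool * H)) : H :=
  match l with
  | nil => one
  | (e, h) :: l' => if e then phi (mul h (traj l')) else psi (mul h (traj l'))
  end.
Definition ypt (e : bool) (h : H) (l' : list (bool * H)) : H :=
  if e then mul h (traj l') else psi (mul h (traj l')).
Fixpoint steps (l : list (bool * H)) (d : nat) : list (bool * H * nat) :=
  match l with
  | nil => nil
  | (e, h) :: l' => (e, ypt e h l', d) :: steps l' d.+1
  end.

Lemma steps_pos l d e y p : List.In (e, y, p) (steps l d) -> d <= p.
Proof.
elim: l d => [|[e' h] l IH] d //=. case=> [[_ _ ->] //|/IH]. lia.
Qed.

Lemma steps_head l d e y : List.In (e, y, d) (steps l d) ->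
  exists h l', l = (e, h) :: l' /\ y = ypt e h l'.
Proof.
case: l => [|[e' h] l] //=. case.
- case=> E1 E2. subst. by exists h, l.
- move/steps_pos. lia.
Qed.

Definition sepd (l : list (bool * H)) := forall e h, List.In (e, h) l ->
  (~ K h -> ~ KL h) /\ (~ K (psi h) -> ~ KL (psi h)).

Lemma hpsi' : is_hom psi. Proof. exact: inv_hom. Qed.

Lemma steps_adj l d e1 y1 e2 y2 p : red K psi l -> sepd l ->
  List.In (e1, y1, p) (steps l d) -> List.In (e2, y2, p.+1) (steps l d) -> cls y1 y2 -> e1 = e2.
Proof.
elim: l d => [|[e h] l IH] d //= rl sl.
case=> [[E1 E2 E3]|in1] in2 cl.
- subst e1 y1 p.
  case: in2 => [[_ _ ]|in2]; first lia.
  case: (steps_head in2) => h' [l'' [El Ey]]. subst l y2.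
  case: rl => npin _.
  case: (sl e h (or_introl erefl)) => s1 s2.
  clear in2 IH sl. case: e e2 npin cl => [] [] //= npin cl.
  + exfalso. apply: s1; last by move: cl; rewrite /cls /ypt /= mulgK.
    move=> Kh. apply: npin. by left.
  + exfalso. apply: s2; last first.
      move: cl. rewrite /cls /ypt /= hpsi' psiphi. by rewrite mulgK.
    move=> Kh. apply: npin. by right.
- have := steps_pos in1. move=> dp.
  case: in2 => [[_ _ ]|in2]; first lia.
  apply: (IH d.+1) in1 in2 cl.
  + move: rl. clear. case: l => [|[??]?] //. by case.
  + move=> e' h' inl. apply: (sl e'). by right.
Qed.

Lemma steps_uniq l d e1 y1 e2 y2 p :
  List.In (e1, y1, p) (steps l d) -> List.In (e2, y2, p) (steps l d) -> e1 = e2 /\ y1 = y2.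
Proof.
elim: l d => [|[e h] l IH] d //=.
case=> [[E1 E2 E3]|in1].
- subst. case=> [[-> ->]|/steps_pos] //. lia.
- case=> [[_ _ E]|in2]; last exact: IH in1 in2.
  subst. have := steps_pos in1. lia.
Qed.

Variable h0 : H.
Variable l : list (bool * H).
Hypothesis rl : red K psi l.
Hypothesis sl : sepd l.

Notation AA := ('I_(length l).+1).

Definition Rel (x : H) (a b : AA) : Prop :=
  exists e y d, List.In (e, y, d) (steps l 0) /\ cls y x /\
    (if e then (nat_of_ord a = d.+1 /\ nat_of_ord b = d) else (nat_of_ord a = d /\ nat_of_ord b = d.+1)).

Lemma Rel_fun x a b b' : Rel x a b -> Rel x a b' -> b = b'.
Proof.
move=> [e1 [y1 [d1 [i1 [c1 h1]]]]] [e2 [y2 [d2 [i2 [c2 h2]]]]].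
have c12 : cls y1 y2 by apply: cls_trans c1 (cls_sym c2).
case: e1 e2 i1 i2 h1 h2 => [] [] i1 i2 [ha hb] [ha' hb'].
- apply: val_inj => /=; lia.
- have E : d2 = d1.+1 by lia. rewrite E in i2.
  by have := steps_adj rl sl i1 i2 c12.
- have E : d1 = d2.+1 by lia. rewrite E in i1.
  by have := steps_adj rl sl i2 i1 (cls_sym c12).
- apply: val_inj => /=; lia.
Qed.

Lemma Rel_inj x a a' b : Rel x a b -> Rel x a' b -> a = a'.
Proof.
move=> [e1 [y1 [d1 [i1 [c1 h1]]]]] [e2 [y2 [d2 [i2 [c2 h2]]]]].
have c12 : cls y1 y2 by apply: cls_trans c1 (cls_sym c2).
case: e1 e2 i1 i2 h1 h2 => [] [] i1 i2 [ha hb] [ha' hb'].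
- apply: val_inj => /=; lia.
- have E : d1 = d2.+1 by lia. rewrite E in i1.
  by have := steps_adj rl sl i2 i1 (cls_sym c12).
- have E : d2 = d1.+1 by lia. rewrite E in i2.
  by have := steps_adj rl sl i1 i2 c12.
- apply: val_inj => /=; lia.
Qed.

Definition sig (x : H) : {perm AA} := pick 1%g (fun s : {perm AA} => forall a b, Rel x a b -> s a = b).

Lemma sig_spec x a b : Rel x a b -> sig x a = b.
Proof.
apply: (@pickP _ 1%g (fun s : {perm AA} => forall a b, Rel x a b -> s a = b)).
apply: perm_ext_rel.
- exact: Rel_fun.
- exact: Rel_inj.
Qed.

Lemma sig_cls x x' : cls x x' -> sig x = sig x'.
Proof.
move=> c. rewrite /sig.
have -> : Rel x = Rel x'; last done.
apply: functional_extensionality => a. apply: functional_extensionality => b.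
apply: propositional_extensionality. rewrite /Rel. split.
- move=> [e [y [d [i [c1 h]]]]]. exists e, y, d. split=> //. split=> //. exact: cls_trans c1 c.
- move=> [e [y [d [i [c1 h]]]]]. exists e, y, d. split=> //. split=> //. exact: cls_trans c1 (cls_sym c).
Qed.

Definition toPerm (s : {perm AA}) : Perm AA :=
  @MkPerm AA (fun a => s a) (fun a => (s^-1)%g a) (permKV s) (permK s).

Definition sigma (x : H) : Perm AA := toPerm (sig x).

Lemma hsigma k x : K k -> sigma (mul k x) = sigma x.
Proof.
move=> Kk. rewrite /sigma (@sig_cls (mul k x) x) //. rewrite /cls mulgK. exact: K_KL.
Qed.

Lemma sig_L x x' : L (mul (inv x) x') -> sig x = sig x'.
Proof.
move=> h. apply: sig_cls. rewrite /cls. apply: L_KL.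
have -> : mul x (inv x') = conjg x' (inv (mul (inv x) x')).
  by rewrite /conjg invM invK !mulA mulgV mul1g.
case: nL => [[L1 [LM LV]] LJ]. auto.
Qed.

Variable rho : G -> SymG (X H AA).
Hypothesis hr : is_hom rho.
Hypothesis hri : forall h, rho (iota h) = fH AA h.
Hypothesis hrt : rho t = sT psiphi phipsi sigma.

Lemma traj_ok l' d : (forall e y d', List.In (e, y, d') (steps l' d) -> List.In (e, y, d') (steps l 0)) ->
  forall a : AA, nat_of_ord a = d + length l' ->
  (pf (rho (valL iota t l')) (one, a)).1 = traj l' /\ nat_of_ord (pf (rho (valL iota t l')) (one, a)).2 = d.
Proof.
elim: l' d => [|[e h] l' IH] d sub a ha.
- rewrite /= (hom1 hr) /=. split=> //. move: ha => /=. lia.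
- have sub' : forall e y d', List.In (e, y, d') (steps l' d.+1) -> List.In (e, y, d') (steps l 0).
    move=> e' y' d' i. apply: sub => /=. by right.
  have ha' : nat_of_ord a = d.+1 + length l' by move: ha => /=; lia.
  case: (IH _ sub' a ha') => E1 E2.
  have ind : List.In (e, ypt e h l', d) (steps l 0) by apply: sub; left.
  set p1 := pf (rho (valL iota t l')) (one, a) in E1 E2.
  have Ep : p1 = (traj l', p1.2) by rewrite -E1; exact: surjective_pairing.
  set a1 := p1.2 in Ep E2.
  have dle : d < (length l).+1.
    have := ltn_ord a1. lia.
  rewrite /= !hr hri /= -/p1 Ep /=.
  clear sub ha IH sub'. case: e ind => ind.
  + rewrite hrt /=. split=> //.
    have R1 : Rel (ypt true h l') a1 (inord d).
      exists true, (ypt true h l'), d. split=> //. split; first exact: cls_refl.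
      by rewrite inordK.
    by rewrite (sig_spec R1) inordK.
  + rewrite (homV hr) hrt /=. split=> //.
    have R1 : Rel (ypt false h l') (inord d) a1.
      exists false, (ypt false h l'), d. split=> //. split; first exact: cls_refl.
      by rewrite inordK.
    have := sig_spec R1. rewrite /ypt => <-. by rewrite permK inordK.
Qed.


Definition Lrel (p q : X H AA) := L (mul (inv p.1) q.1) /\ p.2 = q.2.
Lemma Lrel_refl p : Lrel p p.
Proof. split=> //. rewrite mulVg. by case: nL => [[]]. Qed.
Lemma Lrel_sym p q : Lrel p q -> Lrel q p.
Proof.
case=> h e. split=> //. case: nL => [[L1 [LM LV]] _]. have := LV _ h. by rewrite invM invK.
Qed.
Lemma Lrel_trans p q r : Lrel p q -> Lrel q r -> Lrel p r.
Proof.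
case=> h1 e1 [h2 e2]. split; last by rewrite e1.
case: nL => [[L1 [LM LV]] _]. have := LM _ _ h1 h2. by rewrite -mulA mulKVg.
Qed.

Definition Resp (pi : Perm (X H AA)) := forall p q, Lrel p q ->
  Lrel (pf pi p) (pf pi q) /\ Lrel (pb pi p) (pb pi q).

Lemma rhoM x y p : pf (rho (mul x y)) p = pf (rho x) (pf (rho y) p).
Proof. by rewrite hr. Qed.
Lemma rhoV x p : pf (rho (inv x)) p = pb (rho x) p.
Proof. by rewrite (homV hr). Qed.
Lemma rho1 p : pf (rho one) p = p.
Proof. by rewrite (hom1 hr). Qed.

Lemma resp_all g : Resp (rho g).
Proof.
apply: (hnn_gen hnn (P := fun g => Resp (rho g))).
- split.
  + rewrite (hom1 hr). move=> p q h. by split.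
  + split.
    * move=> x y hx hy p q h. rewrite !rhoM hr /=.
      case: (hy _ _ h) => h1 h2. case: (hx _ _ h1) => h3 _. case: (hx _ _ h2) => _ h4.
      split=> //. case: (hx _ _ h) => _ h5. by case: (hy _ _ h5).
    * move=> x hx p q h. rewrite (homV hr) /=. case: (hx _ _ h) => h1 h2. by split.
- move=> h p q [h1 h2]. rewrite hri /=. split; split=> //.
  + by rewrite invM -mulA mulKg.
  + by rewrite invM invK -mulA mulKVg.
- move=> p q [h1 h2]. rewrite hrt /=. split; split.
  + rewrite -(homV hphi) -hphi. exact: Lphi.
  + by rewrite /= h2 (sig_L h1).
  + rewrite /= -(homV hpsi') -hpsi'. exact: Lpsi.
  + rewrite /= h2 (@sig_L (psi p.1) (psi q.1)) //. rewrite -(homV hpsi') -hpsi'. exact: Lpsi.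
Qed.

Definition Mk (g : G) := forall p, Lrel (pf (rho g) p) p.

Lemma Mk_normal : is_normal Mk.
Proof.
split; first split.
- move=> p. rewrite rho1. exact: Lrel_refl.
- split.
  + move=> x y hx hy p. rewrite rhoM. apply: Lrel_trans (hx p).
    by case: (resp_all x (hy p)).
  + move=> x hx p. rewrite rhoV. apply: Lrel_sym.
    have := hx (pb (rho x) p). by rewrite pfb.
- move=> a x hx p. rewrite /conjg !rhoM rhoV.
  have := proj1 (resp_all a (hx (pb (rho a) p))). by rewrite pfb.
Qed.

Lemma Mk_fi : finite_index Mk.
Proof.
case: (fL) => R HR.
pose T := {ffun 'I_(length R).+1 * AA -> 'I_(length R).+1 * AA}.
pose data (g : G) : T := [ffun pa : 'I_(length R).+1 * AA => (idx L R (pf (rho g) (List.nth pa.1 R one, pa.2)).1,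
                                       (pf (rho g) (List.nth pa.1 R one, pa.2)).2)].
pose u (dd : T) := pick one (fun g => data g = dd).
exists (map u (enum T)) => g.
have ex : exists g', data g' = data g by exists g.
have Eu := @pickP _ one _ ex. rewrite -/(u (data g)) in Eu.
exists (u (data g)). split.
  apply: in_map. apply: inseq_In. by rewrite mem_enum.
exists (mul (inv (u (data g))) g). split; last by rewrite mulKVg.
set g' := u (data g) in Eu *.
move=> [x a]. rewrite rhoM rhoV.
set j := idx L R x. set r := List.nth j R one.
have hx : Lrel (x, a) (r, a).
  apply: Lrel_sym. split=> //. exact: idxP.
have e1 := proj1 (resp_all g hx).
have e3 := proj1 (resp_all g' hx).
have e2 : Lrel (pf (rho g) (r, a)) (pf (rho g') (r, a)).
  have := f_equal (fun f : T => f (j, a)) Eu. rewrite !ffunE /=. case=> E1 E2.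
  split; last by rewrite E2.
  apply: (idx_eq HR nL). by rewrite E1.
have hq : Lrel (pf (rho g) (x, a)) (pf (rho g') (x, a)).
  apply: Lrel_trans e1 _. apply: Lrel_trans e2 _. exact: Lrel_sym.
have := proj2 (resp_all g' hq). rewrite pbf. done.
Qed.

Lemma Mk_sep : (l = nil -> ~ L h0) -> ~ Mk (mul (iota h0) (valL iota t l)).
Proof.
move=> hl Mg.
have := @traj_ok l 0 (fun _ _ _ i => i) ord_max.
case=> //=.
set q := pf (rho (valL iota t l)) (one, ord_max).
move=> E1 E2.
have := Mg (one, ord_max). rewrite rhoM hri -/q /=.
case=> h1 h2.
have l0 : length l = 0.
  have := f_equal (@nat_of_ord _) h2. rewrite E2 /=. lia.
have ln : l = nil by case: (l) l0.
apply: (hl ln).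
have tl : traj l = one by rewrite ln.
move: h1. rewrite /= E1 tl !mulg1.
case: nL => [[L1 [LM LV]] _] => h. have := LV _ h. by rewrite invK.
Qed.

End Main.

End P2.
Import P2.

Lemma build (H : group) (K : H -> Prop) : is_subgroup K -> finite_index (normalizer K) ->
  quotient_residually_finite (normalizer K) K ->
  forall xs : list H, (forall x, List.In x xs -> ~ K x) ->
  exists P, is_subgroup P /\ finite_index P /\ (forall k, K k -> P k) /\
    (forall x, List.In x xs -> ~ P x).
Proof.
move=> HK fiN qrf. elim=> [|x xs IH] hxs.
- exists (fun _ => True). split; first exact: subgroup_true. split; first exact: fi_true. by split.
- case: IH => [y iny|P [sP [fP [KP nP]]]]. apply: hxs. by right.
  case: (sep HK fiN qrf (hxs x (or_introl erefl))) => P' [sP' [fP' [KP' nP']]].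
  exists (fun y => P y /\ P' y). split; first exact: sub_inter.
  split; first exact: fi_inter.
  split; first by move=> k Kk; split; auto.
  move=> y [<-|iny] [h1 h2]; first exact: nP'.
  exact: nP iny h1.
Qed.

Theorem corollary1p2 (H : group) (phi : H -> H) (K : H -> Prop) :
  finitely_generated H ->
  is_automorphism phi ->
  is_subgroup K ->
  (exists h : H, ~ K h) ->
  finite_index (normalizer K) ->
  forall (G : group) (iota : H -> G) (t : G),
    is_HNN K phi iota t ->
    (residually_finite G <->
     residually_finite H /\ quotient_residually_finite (normalizer K) K).
Proof.
move=> fg [hphi [psi [psiphi phipsi]]] HK _ fiN G iota t hnn.
split.
- move=> rf. split; first exact: (RF_sub hnn hphi psiphi phipsi rf).
  move=> Q pi hq. exact: (RF_quot hnn hphi psiphi phipsi HK (norm_sub K) rf hq).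
- move=> [rfH qrf] g ng.
  case: (all_repr hnn phipsi g) => h0 [l [rl Eg]].
  have [L [nL [fL [Lphi [Lpsi [sl hl]]]]]] : exists L, is_normal L /\ finite_index L /\
      (forall x, L x -> L (phi x)) /\ (forall x, L x -> L (psi x)) /\
      sepd K psi L l /\ (l = nil -> ~ L h0).
    case: (l) Eg rl => [|p l'] Eg rl.
    + have nh0 : h0 <> one.
        move=> E. apply: ng. by rewrite Eg E /= (hom1 (hi hnn)) mulg1.
      case: (rfH h0 nh0) => P0 [nP0 [fP0 nP0h]].
      case: (phi_inv_core hphi psiphi phipsi fg nP0 fP0) => L [nL [fL [LP [Lphi Lpsi]]]].
      exists L. do 4 (split=> //). split=> //.
      move=> _. move/LP. exact: nP0h.
    + set l0 := p :: l'.
      pose ok := fun x : H => if excluded_middle_informative (K x) then false else true.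
      pose xs := List.filter ok (flat_map (fun q : bool * H => q.2 :: psi q.2 :: nil) l0).
      have hxs : forall x, List.In x xs -> ~ K x.
        move=> x inx. have [_ hok] := proj1 (filter_In ok x _) inx. move: hok. rewrite /ok. by case: excluded_middle_informative.
      case: (build HK fiN qrf hxs) => P [sP [fP [KP nP]]].
      case: (core_exists sP fP) => L1 [nL1 [fL1 L1P]].
      case: (phi_inv_core hphi psiphi phipsi fg nL1 fL1) => L [nL [fL [LL1 [Lphi Lpsi]]]].
      exists L. do 4 (split=> //). split; last by [].
      have sP' := sP. case: sP' => [P1 [PM PV]].
      have KLP : forall x, KL K L x -> P x.
        move=> _ [k [m [Kk [Lm ->]]]]. apply: PM; first exact: KP. exact: L1P (LL1 _ Lm).
      move=> e h inl. split.
      * move=> nK /KLP Ph. apply: (nP h) => //. apply/filter_In. split.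
          apply/in_flat_map. exists (e, h). split=> //. by left.
        rewrite /ok. by case: excluded_middle_informative.
      * move=> nK /KLP Ph. apply: (nP (psi h)) => //. apply/filter_In. split.
          apply/in_flat_map. exists (e, h). split=> //. by right; left.
        rewrite /ok. by case: excluded_middle_informative.
  have hs := hsigma phi psi HK nL l.
  case: (rep_exists hnn hphi psiphi phipsi hs) => rho [hr [hri hrt]].
  exists (Mk L rho). split; first exact: (Mk_normal hnn hphi HK nL Lphi Lpsi hr hri hrt).
  split; first exact: (Mk_fi hnn hphi HK nL fL Lphi Lpsi hr hri hrt).
  rewrite Eg. exact: (Mk_sep hphi HK nL rl sl hr hri hrt hl).
Qed.
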